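(* For complex numbers $x,y$ with $y\neq 0$, define \[ A(x,y)=\sum_{n=0}^{\infty} x^n\binom{2n}{n}\sum_{k=0}^n\binom{n}{k}^2\binom{2k}{n}(-1)^k y^{2k-n}. \] If $x$ and $y$ are such that this double series converges absolutely, then \[ A(x,y)=\sum_{k=0}^{\infty}(-xy)^k\binom{2k}{k}^2 P_{2k}\!\left(\sqrt{1+\frac{4x}{y}}\right), \] where $P_m$ denotes the $m$-th Legendre polynomial.
   Context: $\binom{2k}{n}=0$ for $n>2k$. Since $P_{2k}$ is an even polynomial, the choice of square root is immaterial. *)

(* Defs.v *)
From Stdlib Require Import Reals.
From Coquelicot Require Import Coquelicot.

(* natural-number binomial coefficient, with binom n k = 0 for k > n *)
Fixpoint binom (n k : nat) : nat :=
  match n, k with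
  | _, O => 1
  | O, S _ => 0
  | S n', S k' => binom n' k' + binom n' (S k')
  end.

Definition Cnat (m : nat) : C := RtoC (INR m).

Definition Czpow (y : C) (a b : nat) : C :=
  if Nat.leb b a then pow_n (K := C_Ring) y (a - b)
  else Cinv (pow_n (K := C_Ring) y (b - a)).

(* Legendre polynomials via Bonnet's recurrence:
   P_0 = 1, P_1 = t, (n+2) P_{n+2} = (2n+3) t P_{n+1} - (n+1) P_n.
   legendre_pair n t = (P_n(t), P_{n+1}(t)). *)
Fixpoint legendre_pair (n : nat) (t : C) : C * C :=
  match n with
  | O => (RtoC 1, t)
  | S n' =>
      let (p, q) := legendre_pair n' t in
      (q, Cdiv (Cminus (Cmult (Cmult (Cnat (2 * n' + 3)) t) q)
                       (Cmult (Cnat (n' + 1)) p))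
               (Cnat (n' + 2)))
  end.

Definition legendreP (m : nat) (t : C) : C := fst (legendre_pair m t).

Definition A_term (x y : C) (n k : nat) : C :=
  Cmult (Cmult (pow_n (K := C_Ring) x n) (Cnat (binom (2 * n) n)))
    (Cmult (Cmult (Cnat (binom n k ^ 2)) (Cnat (binom (2 * k) n)))
       (Cmult (pow_n (K := C_Ring) (Copp (RtoC 1)) k) (Czpow y (2 * k) n))).

Definition A_row (x y : C) (n : nat) : C :=
  sum_n (fun k => A_term x y n k) n.

Definition A_abs_conv (x y : C) : Prop :=
  ex_series (fun n => sum_n (fun k => Cmod (A_term x y n k)) n).

(* Main.v *)
Require Import Defs.
From Stdlib Require Import Reals Lra Lia Arith.
From Coquelicot Require Import Coquelicot.


Lemma binom_0 n : binom n 0 = 1%nat.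
Proof. destruct n; reflexivity. Qed.

Lemma binom_big : forall n k, (n < k)%nat -> binom n k = 0%nat.
Proof.
  induction n; intros k H; destruct k; simpl; try lia; try reflexivity.
  rewrite !IHn; lia.
Qed.

Lemma binom_SS n k : binom (S n) (S k) = (binom n k + binom n (S k))%nat.
Proof. reflexivity. Qed.

Lemma binom_absorb : forall k j, (S j * binom k (S j) = (k - j) * binom k j)%nat.
Proof.
  induction k; intros j.
  - simpl. lia.
  - destruct j.
    + rewrite binom_SS, !binom_0. specialize (IHk 0%nat). rewrite binom_0 in IHk. lia.
    + rewrite !binom_SS. specialize (IHk j) as H1. specialize (IHk (S j)) as H2.
      destruct (le_lt_dec (S j) k).
      * replace (S k - S j)%nat with (k - j)%nat by lia.
        replace (k - j)%nat with (S (k - S j)) in * by lia. nia.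
      * rewrite (binom_big k (S (S j))) by lia. rewrite (binom_big k (S j)) by lia.
        replace (S k - S j)%nat with 0%nat by lia. lia.
Qed.

Lemma binom_succ : forall k j, (S k * binom k j = (S k - j) * binom (S k) j)%nat.
Proof.
  intros k j. destruct j.
  - rewrite !binom_0. lia.
  - rewrite binom_SS. pose proof (binom_absorb k j).
    destruct (le_lt_dec (S j) k).
    + replace (S k - S j)%nat with (k - j)%nat by lia.
      replace (k - j)%nat with (S (k - S j)) in * by lia. nia.
    + rewrite (binom_big k (S j)) by lia. lia.
Qed.

Lemma binom_fact : forall n k, (k <= n)%nat ->
  (binom n k * fact k * fact (n - k) = fact n)%nat.
Proof.
  induction n; intros k Hk.
  - replace k with 0%nat by lia. reflexivity.
  - destruct k.
    + rewrite binom_0. simpl. lia.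
    + rewrite binom_SS. replace (S n - S k)%nat with (n - k)%nat by lia.
      destruct (Nat.eq_dec k n).
      * subst. rewrite (binom_big n (S n)) by lia. rewrite Nat.sub_diag.
        specialize (IHn n (le_n n)). rewrite Nat.sub_diag in IHn.
        pose proof (lt_O_fact n). change (fact 0) with 1%nat in *.
        assert (binom n n = 1%nat) by nia. rewrite H0. lia.
      * pose proof (IHn k ltac:(lia)) as H1. pose proof (IHn (S k) ltac:(lia)) as H2.
        replace (n - k)%nat with (S (n - S k)) in * by lia.
        simpl fact in *. nia.
Qed.

Fixpoint pp (k j : nat) : R :=
  match j with
  | O => 1
  | S i => pp k i * (2 * INR k + 2 * INR i + 1) / (2 * INR i + 2)
  end.

Lemma INR_pos_aux n : 0 <= INR n.
Proof. apply pos_INR. Qed.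

Lemma pp_S : forall k j, pp (S k) j * (2 * INR k + 1) = pp k j * (2 * INR k + 2 * INR j + 1).
Proof.
  intros k j. induction j.
  - simpl. lra.
  - cbn [pp]. pose proof (pos_INR j). pose proof (pos_INR k).
    assert (HX : pp (S k) j = pp k j * (2 * INR k + 2 * INR j + 1) / (2 * INR k + 1)).
    { rewrite <- IHj. field. lra. }
    rewrite HX. rewrite !S_INR. field. lra.
Qed.

Definition ec (k j : nat) : R := INR (binom k j) * pp k j.
Definition dc (k j : nat) : R := INR (binom k j) * pp (S k) j.
Definition sh (f : nat -> R) (j : nat) : R := match j with O => 0 | S i => f i end.

Lemma Rec1 : forall k j,
  (2 * INR k + 2) * ec (S k) j =
  (4 * INR k + 3) * (dc k j + sh (dc k) j) - (2 * INR k + 1) * ec k j.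
Proof.
  intros k j. unfold ec, dc. destruct j as [|i].
  - simpl. rewrite !binom_0. simpl. lra.
  - unfold sh. rewrite binom_SS, plus_INR.
    pose proof (pos_INR k). pose proof (pos_INR i).
    assert (Hp : pp k (S i) = pp (S k) (S i) * (2 * INR k + 1) / (2 * INR k + 2 * INR (S i) + 1)).
    { rewrite (pp_S k (S i)). rewrite S_INR. field. lra. }
    rewrite Hp. cbn [pp]. rewrite !S_INR.
    pose proof (binom_absorb k i) as Hab.
    destruct (le_lt_dec i k).
    + apply (f_equal INR) in Hab. rewrite !mult_INR, minus_INR, S_INR in Hab by lia.
      assert (HB : INR (binom k (S i)) = (INR k - INR i) * INR (binom k i) / (INR i + 1)).
      { rewrite <- Hab. field. lra. }
      rewrite HB. field. lra.
    + rewrite (binom_big k i) by lia. rewrite (binom_big k (S i)) by lia. simpl. lra.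
Qed.

Lemma Rec2 : forall k j,
  (2 * INR k + 3) * dc (S k) j =
  (4 * INR k + 5) * ec (S k) j - (2 * INR k + 2) * dc k j.
Proof.
  intros k j. unfold ec, dc.
  pose proof (pos_INR k). pose proof (pos_INR j).
  assert (Hp : pp (S (S k)) j = pp (S k) j * (2 * INR (S k) + 2 * INR j + 1) / (2 * INR (S k) + 1)).
  { rewrite <- (pp_S (S k) j). rewrite S_INR. field. lra. }
  rewrite Hp. pose proof (binom_succ k j) as Hs.
  destruct (le_lt_dec j (S k)).
  + apply (f_equal INR) in Hs. rewrite !mult_INR, minus_INR, !S_INR in Hs by lia.
    rewrite S_INR in *.
    assert (HB : INR (binom k j) = (INR k + 1 - INR j) * INR (binom (S k) j) / (INR k + 1)).
    { rewrite <- Hs. field. lra. }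
    rewrite HB. field. lra.
  + rewrite (binom_big k j) by lia. rewrite (binom_big (S k) j) by lia. simpl. lra.
Qed.


Lemma plusC (a b : C) : @plus C_AbelianGroup a b = Cplus a b.
Proof. reflexivity. Qed.
Lemma multC (a b : C) : @mult C_Ring a b = Cmult a b.
Proof. reflexivity. Qed.
Lemma pow_n_S (s : C) n : pow_n (K := C_Ring) s (S n) = Cmult s (pow_n (K := C_Ring) s n).
Proof. reflexivity. Qed.

Definition ps (a : nat -> R) (N : nat) (s : C) : C :=
  sum_n (fun j => Cmult (RtoC (a j)) (pow_n (K := C_Ring) s j)) N.

Lemma ps_S a N s : ps a (S N) s = Cplus (ps a N s) (Cmult (RtoC (a (S N))) (pow_n (K := C_Ring) s (S N))).
Proof. unfold ps. rewrite sum_Sn. reflexivity. Qed.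

Lemma ps_O a s : ps a 0 s = RtoC (a 0%nat).
Proof. unfold ps. rewrite sum_O. change (pow_n (K:=C_Ring) s 0) with (RtoC 1). ring. Qed.

Lemma ps_ext a b N s : (forall j, (j <= N)%nat -> a j = b j) -> ps a N s = ps b N s.
Proof. intros H. unfold ps. apply sum_n_ext_loc. intros n Hn. rewrite H by lia. reflexivity. Qed.

Lemma ps_ext0 a N s : a (S N) = 0 -> ps a (S N) s = ps a N s.
Proof. intros H. rewrite ps_S, H. ring. Qed.

Lemma ps_lin3 (al be ga : R) a b c N s :
  ps (fun j => al * a j + be * b j + ga * c j) N s =
  Cplus (Cplus (Cmult (RtoC al) (ps a N s)) (Cmult (RtoC be) (ps b N s))) (Cmult (RtoC ga) (ps c N s)).
Proof.
  induction N.
  - rewrite !ps_O. rewrite !RtoC_plus, !RtoC_mult. ring.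
  - rewrite !ps_S, IHN. rewrite !RtoC_plus, !RtoC_mult. ring.
Qed.

Lemma ps_shift a N s : Cmult s (ps a N s) = ps (sh a) (S N) s.
Proof.
  induction N.
  - rewrite ps_S, !ps_O. cbn [sh]. rewrite pow_n_S. change (pow_n (K:=C_Ring) s 0) with (RtoC 1). ring.
  - rewrite ps_S, (ps_S (sh a) (S N)), <- IHN. rewrite (pow_n_S s (S N)). cbn [sh]. ring.
Qed.

Lemma ec_big k j : (k < j)%nat -> ec k j = 0.
Proof. intros H. unfold ec. rewrite binom_big by lia. simpl. ring. Qed.
Lemma dc_big k j : (k < j)%nat -> dc k j = 0.
Proof. intros H. unfold dc. rewrite binom_big by lia. simpl. ring. Qed.

Lemma LP_S n t : legendre_pair (S n) t =
  (snd (legendre_pair n t),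
   Cdiv (Cminus (Cmult (Cmult (Cnat (2 * n + 3)) t) (snd (legendre_pair n t)))
                (Cmult (Cnat (n + 1)) (fst (legendre_pair n t))))
        (Cnat (n + 2))).
Proof. simpl. destruct (legendre_pair n t). reflexivity. Qed.

Lemma Cmult_eq_reg_l (a b c : C) : Cmult a b = Cmult a c -> a <> RtoC 0 -> b = c.
Proof.
  intros H Ha. replace b with (Cmult (Cinv a) (Cmult a b)) by (field; exact Ha).
  rewrite H. field. exact Ha.
Qed.

Lemma Cnat_neq0 n : (0 < n)%nat -> Cnat n <> RtoC 0.
Proof.
  intros H E. unfold Cnat in E. apply RtoC_inj in E. apply lt_0_INR in H. lra.
Qed.

Lemma step1 (a b c X E O E' s w : C) : X <> RtoC 0 -> Cmult w w = Cplus (RtoC 1) s ->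
  c = Copp b ->
  Cmult X E' = Cplus (Cplus (Cmult a O) (Cmult a (Cmult s O))) (Cmult c E) ->
  Cdiv (Cminus (Cmult (Cmult a w) (Cmult w O)) (Cmult b E)) X = E'.
Proof.
  intros HX Hw Hc H. subst c. apply (Cmult_eq_reg_l X); [|exact HX]. rewrite H.
  replace (Cmult (Cmult a w) (Cmult w O)) with (Cmult a (Cmult (Cmult w w) O)) by ring.
  rewrite Hw. field. exact HX.
Qed.

Lemma step2 (a b c X E O O' w : C) : X <> RtoC 0 -> c = Copp b ->
  Cmult X O' = Cplus (Cplus (Cmult a E) (Cmult c O)) (Cmult (RtoC 0) O) ->
  Cdiv (Cminus (Cmult (Cmult a w) E) (Cmult b (Cmult w O))) X = Cmult w O'.
Proof.
  intros HX Hc H. subst c. apply (Cmult_eq_reg_l X); [|exact HX].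
  replace (Cmult X (Cmult w O')) with (Cmult w (Cmult X O')) by ring. rewrite H.
  field. exact HX.
Qed.

Lemma Cnat_eq1 k : Cnat (2 * (2 * k) + 3) = RtoC (4 * INR k + 3).
Proof. unfold Cnat. f_equal. rewrite plus_INR, !mult_INR. simpl. ring. Qed.
Lemma Cnat_eq2 k : Cnat (2 * k + 1) = RtoC (2 * INR k + 1).
Proof. unfold Cnat. f_equal. rewrite plus_INR, !mult_INR. simpl. ring. Qed.
Lemma Cnat_eq3 k : Cnat (2 * k + 2) = RtoC (2 * INR k + 2).
Proof. unfold Cnat. f_equal. rewrite plus_INR, !mult_INR. simpl. ring. Qed.
Lemma Cnat_eq4 k : Cnat (2 * S (2 * k) + 3) = RtoC (4 * INR k + 5).
Proof. unfold Cnat. f_equal. rewrite plus_INR, mult_INR, (S_INR (2*k)), mult_INR. simpl. ring. Qed.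
Lemma Cnat_eq5 k : Cnat (S (2 * k) + 1) = RtoC (2 * INR k + 2).
Proof. unfold Cnat. f_equal. rewrite plus_INR, (S_INR (2*k)), !mult_INR. simpl. ring. Qed.
Lemma Cnat_eq6 k : Cnat (S (2 * k) + 2) = RtoC (2 * INR k + 3).
Proof. unfold Cnat. f_equal. rewrite plus_INR, (S_INR (2*k)), !mult_INR. simpl. ring. Qed.

Lemma legendre_closed (w : C) : forall k,
  legendre_pair (2 * k) w =
  (ps (ec k) k (Cminus (Cmult w w) (RtoC 1)),
   Cmult w (ps (dc k) k (Cminus (Cmult w w) (RtoC 1)))).
Proof.
  set (s := Cminus (Cmult w w) (RtoC 1)).
  assert (Hw : Cmult w w = Cplus (RtoC 1) s) by (unfold s; ring).
  induction k.
  - replace (legendre_pair (2*0) w) with (RtoC 1, w) by reflexivity. rewrite !ps_O. unfold ec, dc.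
    replace (INR (binom 0 0) * pp 0 0) with 1 by (simpl; ring).
    replace (INR (binom 0 0) * pp 1 0) with 1 by (simpl; ring). f_equal. ring.
  - replace (2 * S k)%nat with (S (S (2 * k))) by lia.
    rewrite !LP_S, IHk. cbn [fst snd].
    pose proof (pos_INR k) as Hk.
    assert (E1 : Cdiv (Cminus (Cmult (Cmult (Cnat (2 * (2 * k) + 3)) w) (Cmult w (ps (dc k) k s)))
                  (Cmult (Cnat (2 * k + 1)) (ps (ec k) k s))) (Cnat (2 * k + 2))
                 = ps (ec (S k)) (S k) s).
    { assert (Hc : Cmult (RtoC (2 * INR k + 2)) (ps (ec (S k)) (S k) s) =
        Cplus (Cplus (Cmult (RtoC (4 * INR k + 3)) (ps (dc k) (S k) s))
                     (Cmult (RtoC (4 * INR k + 3)) (ps (sh (dc k)) (S k) s)))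
              (Cmult (RtoC (- (2 * INR k + 1))) (ps (ec k) (S k) s))).
      { rewrite <- ps_lin3.
        assert (Hl : forall N, Cmult (RtoC (2 * INR k + 2)) (ps (ec (S k)) N s) =
                     ps (fun j => (2 * INR k + 2) * ec (S k) j + 0 * ec (S k) j + 0 * ec (S k) j) N s).
        { intros N. rewrite ps_lin3.
          replace (RtoC 0) with (Cmult (RtoC 0) (RtoC 0)) by (rewrite <- RtoC_mult; f_equal; ring).
          ring. }
        rewrite Hl. apply ps_ext. intros j _. rewrite Rec1. ring. }
      rewrite <- ps_shift in Hc.
      rewrite (ps_ext0 (dc k)) in Hc by (apply dc_big; lia).
      rewrite (ps_ext0 (ec k)) in Hc by (apply ec_big; lia).
      rewrite (Cnat_eq1 k), (Cnat_eq2 k), (Cnat_eq3 k).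
      assert (Hnz : RtoC (2 * INR k + 2) <> RtoC 0) by (intro E; apply RtoC_inj in E; lra).
      apply step1 with (s := s) (c := RtoC (- (2 * INR k + 1))); try assumption. apply RtoC_opp. }
    rewrite E1. f_equal.
    assert (Hc : Cmult (RtoC (2 * INR k + 3)) (ps (dc (S k)) (S k) s) =
        Cplus (Cplus (Cmult (RtoC (4 * INR k + 5)) (ps (ec (S k)) (S k) s))
                     (Cmult (RtoC (- (2 * INR k + 2))) (ps (dc k) (S k) s)))
              (Cmult (RtoC 0) (ps (dc k) (S k) s))).
    { rewrite <- ps_lin3.
      assert (Hl : forall N, Cmult (RtoC (2 * INR k + 3)) (ps (dc (S k)) N s) =
                   ps (fun j => (2 * INR k + 3) * dc (S k) j + 0 * dc (S k) j + 0 * dc (S k) j) N s).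
      { intros N. rewrite ps_lin3.
        replace (RtoC 0) with (Cmult (RtoC 0) (RtoC 0)) by (rewrite <- RtoC_mult; f_equal; ring).
        ring. }
      rewrite Hl. apply ps_ext. intros j _. rewrite Rec2. ring. }
    rewrite (ps_ext0 (dc k)) in Hc by (apply dc_big; lia).
    rewrite (Cnat_eq4 k), (Cnat_eq5 k), (Cnat_eq6 k).
    assert (Hnz : RtoC (2 * INR k + 3) <> RtoC 0) by (intro E; apply RtoC_inj in E; lra).
    apply step2 with (c := RtoC (- (2 * INR k + 2))); try assumption. apply RtoC_opp.
Qed.


Lemma INR_fact_S m : INR (fact (S m)) = INR (S m) * INR (fact m).
Proof. change (fact (S m)) with (S m * fact m)%nat. apply mult_INR. Qed.

Lemma binom_INR n k : (k <= n)%nat ->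
  INR (binom n k) = INR (fact n) / (INR (fact k) * INR (fact (n - k))).
Proof.
  intros H. pose proof (binom_fact n k H) as E. apply (f_equal INR) in E.
  rewrite !mult_INR in E. rewrite <- E. field.
  split; apply INR_fact_neq_0.
Qed.

Lemma pp_closed k : forall j,
  pp k j * INR (fact (2 * k)) * 4 ^ j * INR (fact (k + j)) * INR (fact j)
  = INR (fact (2 * k + 2 * j)) * INR (fact k).
Proof.
  induction j.
  - cbn [pp]. rewrite !Nat.add_0_r. simpl (4 ^ 0). simpl (fact 0). simpl INR. ring.
  - cbn [pp]. replace (k + S j)%nat with (S (k + j)) by lia.
    replace (2 * k + 2 * S j)%nat with (S (S (2 * k + 2 * j))) by lia.
    assert (Hp : pp k j = INR (fact (2 * k + 2 * j)) * INR (fact k) /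
      (INR (fact (2 * k)) * 4 ^ j * INR (fact (k + j)) * INR (fact j))).
    { rewrite <- IHj. field. repeat split; try apply INR_fact_neq_0. apply pow_nonzero. lra. }
    rewrite Hp. rewrite !INR_fact_S. repeat rewrite ?S_INR, ?plus_INR, ?mult_INR. rewrite <- tech_pow_Rmult.
    simpl INR. pose proof (pos_INR j). pose proof (pos_INR k). field.
    repeat split; try apply INR_fact_neq_0; try lra. apply pow_nonzero. lra.
Qed.

Lemma coef_identity k j : (j <= k)%nat ->
  INR (binom (2 * k) k ^ 2) * ec k j * 4 ^ j =
  INR (binom (2 * (k + j)) (k + j)) * INR (binom (k + j) k ^ 2) * INR (binom (2 * k) (k + j)).
Proof.
  intros Hjk. unfold ec. rewrite !pow_INR.
  rewrite !binom_INR by lia.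
  replace (2 * (k + j) - (k + j))%nat with (k + j)%nat by lia.
  replace (k + j - k)%nat with j by lia.
  replace (2 * k - (k + j))%nat with (k - j)%nat by lia.
  replace (2 * k - k)%nat with k by lia.
  replace (2 * (k + j))%nat with (2 * k + 2 * j)%nat by lia.
  assert (Hp : pp k j = INR (fact (2 * k + 2 * j)) * INR (fact k) /
     (INR (fact (2 * k)) * 4 ^ j * INR (fact (k + j)) * INR (fact j))).
  { rewrite <- pp_closed. field. repeat split; try apply INR_fact_neq_0. apply pow_nonzero. lra. }
  rewrite Hp. field.
  repeat split; try apply INR_fact_neq_0. apply pow_nonzero. lra.
Qed.

Lemma pow_n_mult (a b : C) n : @eq C (pow_n (K := C_Ring) (Cmult a b) n) (Cmult (pow_n (K := C_Ring) a n) (pow_n (K := C_Ring) b n)).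
Proof. induction n. - change (@eq C (RtoC 1) (Cmult (RtoC 1) (RtoC 1))). ring. - rewrite !pow_n_S, IHn. ring. Qed.

Lemma pow_n_RtoC (r : R) n : @eq C (pow_n (K := C_Ring) (RtoC r) n) (RtoC (r ^ n)).
Proof. induction n. - reflexivity. - rewrite pow_n_S, IHn. simpl pow. rewrite RtoC_mult. reflexivity. Qed.

Lemma pow_n_add (a : C) n m : @eq C (pow_n (K := C_Ring) a (n + m)) (Cmult (pow_n (K := C_Ring) a n) (pow_n (K := C_Ring) a m)).
Proof. exact (@pow_n_plus C_Ring a n m). Qed.

Lemma pow_n_one n : @eq C (pow_n (K := C_Ring) (RtoC 1) n) (RtoC 1).
Proof. rewrite pow_n_RtoC, pow1. reflexivity. Qed.

Lemma term_identity (x y : C) k j : y <> RtoC 0 -> (j <= k)%nat ->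
  Cmult (Cmult (pow_n (K := C_Ring) (Copp (Cmult x y)) k) (Cnat (binom (2 * k) k ^ 2)))
        (Cmult (RtoC (ec k j)) (pow_n (K := C_Ring) (Cdiv (Cmult (RtoC 4) x) y) j))
  = A_term x y (k + j) k.
Proof.
  intros Hy Hjk. unfold A_term, Czpow.
  replace (Nat.leb (k + j) (2 * k)) with true by (symmetry; apply Nat.leb_le; lia).
  replace (2 * k - (k + j))%nat with (k - j)%nat by lia.
  set (P := pow_n (K := C_Ring) (Copp (RtoC 1)) k).
  replace (Copp (Cmult x y)) with (Cmult (Copp (RtoC 1)) (Cmult x y)) by ring.
  replace (Cdiv (Cmult (RtoC 4) x) y) with (Cmult (RtoC 4) (Cmult x (Cinv y))) by (field; exact Hy).
  rewrite !pow_n_mult, pow_n_RtoC. fold P.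
  rewrite pow_n_add.
  replace (pow_n (K := C_Ring) y k) with (Cmult (pow_n (K := C_Ring) y (k - j)) (pow_n (K := C_Ring) y j))
    by (rewrite <- pow_n_add; f_equal; lia).
  assert (Hyj : Cmult (pow_n (K := C_Ring) y j) (pow_n (K := C_Ring) (Cinv y) j) = RtoC 1).
  { rewrite <- pow_n_mult. replace (Cmult y (Cinv y)) with (RtoC 1) by (field; exact Hy).
    apply pow_n_one. }
  pose proof (coef_identity k j Hjk) as Hr.
  apply (f_equal RtoC) in Hr. rewrite !RtoC_mult in Hr.
  unfold Cnat.
  transitivity (Cmult (Cmult (Cmult P (Cmult (pow_n (K := C_Ring) x k) (pow_n (K := C_Ring) x j)))
      (Cmult (pow_n (K := C_Ring) y (k - j)) (Cmult (pow_n (K := C_Ring) y j) (pow_n (K := C_Ring) (Cinv y) j))))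
      (Cmult (Cmult (RtoC (INR (binom (2 * k) k ^ 2))) (RtoC (ec k j))) (RtoC (4 ^ j)))).
  { ring. }
  rewrite Hyj, Hr. ring.
Qed.



Lemma sum_n_Sfront {G : AbelianMonoid} (f : nat -> G) N : sum_n f (S N) = plus (f 0%nat) (sum_n (fun i => f (S i)) N).
Proof.
  unfold sum_n. rewrite sum_Sn_m by lia. rewrite sum_n_m_S. reflexivity.
Qed.

Lemma sum_n_shift {G : AbelianMonoid} : forall k (f : nat -> G) m, (forall n, (n < k)%nat -> f n = zero) ->
  sum_n f (k + m) = sum_n (fun j => f (k + j)%nat) m.
Proof.
  induction k; intros f m H.
  - reflexivity.
  - simpl. rewrite sum_n_Sfront. rewrite H by lia. rewrite plus_zero_l.
    rewrite (IHk (fun i => f (S i))). reflexivity. intros n Hn. apply H. lia.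
Qed.

Lemma sum_n_zero_ext {G : AbelianMonoid} : forall (f : nat -> G) N M, (forall i, (N < i)%nat -> f i = zero) -> (N <= M)%nat ->
  sum_n f M = sum_n f N.
Proof.
  intros f N M H HM. induction HM.
  - reflexivity.
  - rewrite sum_Sn, IHHM, H by lia. apply plus_zero_r.
Qed.

Lemma sum_n_zero {G : AbelianMonoid} : forall N, sum_n (fun _ : nat => (zero : G)) N = zero.
Proof. intros N. unfold sum_n. apply sum_n_m_const_zero. Qed.

Lemma sum_n_fubini {G : AbelianMonoid} : forall (f : nat -> nat -> G) N M,
  sum_n (fun n => sum_n (fun k => f n k) M) N = sum_n (fun k => sum_n (fun n => f n k) N) M.
Proof.
  intros f N M. induction N.
  - rewrite sum_O. apply sum_n_ext. intros k. rewrite sum_O. reflexivity.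
  - rewrite sum_Sn, IHN. rewrite <- sum_n_plus. apply sum_n_ext. intros k. rewrite sum_Sn. reflexivity.
Qed.

Lemma sum_n_m_ind {G : AbelianMonoid} (h : nat -> G) K M : (K <= M)%nat ->
  sum_n_m h (S K) M = sum_n (fun k => if Nat.leb k K then zero else h k) M.
Proof.
  intros HKM. unfold sum_n. rewrite (sum_n_m_Chasles _ 0 K M) by lia.
  rewrite (sum_n_m_ext_loc _ (fun _ => zero) 0 K).
  2:{ intros k Hk. replace (Nat.leb k K) with true by (symmetry; apply Nat.leb_le; lia). reflexivity. }
  rewrite sum_n_m_const_zero, plus_zero_l. apply sum_n_m_ext_loc.
  intros k Hk. replace (Nat.leb k K) with false by (symmetry; apply Nat.leb_gt; lia). reflexivity.
Qed.

Lemma sum_n_le_loc (a b : nat -> R) N : (forall n, (n <= N)%nat -> a n <= b n) -> sum_n a N <= sum_n b N.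
Proof. intros H. rewrite !sum_n_Reals. apply sum_Rle. exact H. Qed.

Lemma sum_n_nonneg (a : nat -> R) N : (forall n, 0 <= a n) -> 0 <= sum_n a N.
Proof. intros H. rewrite sum_n_Reals. apply cond_pos_sum. exact H. Qed.

Lemma sum_n_mono (a : nat -> R) N M : (forall n, 0 <= a n) -> (N <= M)%nat -> sum_n a N <= sum_n a M.
Proof.
  intros H HM. induction HM. - lra. - rewrite sum_Sn. change (plus (sum_n a m) (a (S m))) with (sum_n a m + a (S m)).
  specialize (H (S m)). lra.
Qed.

Lemma bound_D (t : nat -> nat -> R) K :
  (forall n k, 0 <= t n k) -> (forall n k, (n < k)%nat -> t n k = 0) ->
  sum_n_m (fun k => sum_n (fun n => t n k) (2 * K)) (S K) (2 * K)
  <= sum_n_m (fun n => sum_n (fun k => t n k) n) (S K) (2 * K).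
Proof.
  intros Hpos Hz.
  rewrite !sum_n_m_ind by lia.
  transitivity (sum_n (fun k => sum_n (fun n => if Nat.leb k K then 0 else t n k) (2 * K)) (2 * K)).
  { apply Req_le. apply sum_n_ext. intros k. destruct (Nat.leb k K).
    - symmetry. apply (sum_n_zero (G := R_AbelianMonoid)).
    - reflexivity. }
  rewrite <- sum_n_fubini.
  apply sum_n_le_loc. intros n Hn.
  destruct (Nat.leb n K) eqn:E.
  - apply Nat.leb_le in E. apply Req_le.
    transitivity (sum_n (fun _ : nat => (zero : R_AbelianMonoid)) (2 * K)).
    + apply sum_n_ext. intros k. destruct (Nat.leb k K) eqn:E2; [reflexivity|].
      apply Nat.leb_gt in E2. apply Hz. lia.
    + apply (sum_n_zero (G := R_AbelianMonoid)).
  - apply Nat.leb_gt in E.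
    transitivity (sum_n (fun k => t n k) (2 * K)).
    + apply sum_n_le_loc. intros k _. destruct (Nat.leb k K); [apply Hpos | lra].
    + apply Req_le. apply (sum_n_zero_ext (G := R_AbelianMonoid)); [| lia].
      intros i Hi. apply Hz. exact Hi.
Qed.


Lemma T_zero1 x y n k : (n < k)%nat -> A_term x y n k = RtoC 0.
Proof.
  intros H. unfold A_term. rewrite (binom_big n k) by lia.
  change (Cnat (0 ^ 2)) with (RtoC 0). ring.
Qed.

Lemma T_zero2 x y n k : (2 * k < n)%nat -> A_term x y n k = RtoC 0.
Proof.
  intros H. unfold A_term. rewrite (binom_big (2 * k) n) by lia.
  change (Cnat 0) with (RtoC 0). ring.
Qed.

Lemma leg_term (x y w : C) k : y <> RtoC 0 ->
  Cmult w w = Cplus (RtoC 1) (Cdiv (Cmult (RtoC 4) x) y) ->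
  Cmult (Cmult (pow_n (K := C_Ring) (Copp (Cmult x y)) k) (Cnat (binom (2 * k) k ^ 2)))
        (legendreP (2 * k) w) = sum_n (fun n => A_term x y n k) (2 * k).
Proof.
  intros Hy Hw. unfold legendreP. rewrite legendre_closed. cbn [fst].
  replace (Cminus (Cmult w w) (RtoC 1)) with (Cdiv (Cmult (RtoC 4) x) y) by (rewrite Hw; ring).
  unfold ps.
  set (c := Cmult (pow_n (K := C_Ring) (Copp (Cmult x y)) k) (Cnat (binom (2 * k) k ^ 2))).
  rewrite <- (sum_n_mult_l (K := C_Ring) c).
  replace (sum_n (fun n => A_term x y n k) (2 * k)) with (sum_n (fun n => A_term x y n k) (k + k)) by (f_equal; lia).
  rewrite (sum_n_shift k (fun n => A_term x y n k) k).
  - apply sum_n_ext_loc. intros j Hj. apply term_identity; assumption.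
  - intros n Hn. apply T_zero1. exact Hn.
Qed.

Theorem proposition2p1 (x y : C) :
  y <> RtoC 0 ->
  A_abs_conv x y ->
  forall w : C, Cmult w w = Cplus (RtoC 1) (Cdiv (Cmult (RtoC 4) x) y) ->
  exists A : C,
    is_series (A_row x y) A /\
    is_series
      (fun k => Cmult (Cmult (pow_n (K := C_Ring) (Copp (Cmult x y)) k)
                             (Cnat (binom (2 * k) k ^ 2)))
                      (legendreP (2 * k) w))
      A.
Proof.
  intros Hy Habs w Hw.
  assert (Hex : ex_series (A_row x y)).
  { apply (ex_series_le (K := C_AbsRing) (V := C_CompleteNormedModule) _
             (fun n => sum_n (fun k => Cmod (A_term x y n k)) n)); [| exact Habs].
    intros n. unfold A_row, sum_n. eapply Rle_trans; [exact (norm_sum_n_m (V := C_NormedModule) (fun k => A_term x y n k) 0 n)|].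
    apply Req_le. apply sum_n_m_ext. intros k. reflexivity. }
  destruct Hex as [A HA]. exists A. split; [exact HA|].
  unfold is_series. apply (proj2 (filterlim_locally_ball_norm _ _)). intros eps.
  assert (He2 : 0 < eps / 2) by (destruct eps; simpl; lra).
  set (e2 := mkposreal _ He2).
  pose proof (proj1 (filterlim_locally_ball_norm _ _) HA e2) as [N1 HN1].
  pose proof (Cauchy_ex_series _ Habs e2) as [N2 HN2].
  exists (max N1 N2). intros K HK.
  set (T := A_term x y).
  set (G := fun k => sum_n (fun n => T n k) (2 * K)).
  assert (HL : sum_n (fun k => Cmult (Cmult (pow_n (K := C_Ring) (Copp (Cmult x y)) k)
                             (Cnat (binom (2 * k) k ^ 2))) (legendreP (2 * k) w)) K = sum_n G K).
  { apply sum_n_ext_loc. intros k Hk. rewrite leg_term by assumption. unfold G.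
    symmetry. apply sum_n_zero_ext; [| lia]. intros i Hi. apply T_zero2. exact Hi. }
  assert (HR : sum_n (A_row x y) (2 * K) = plus (sum_n G K) (sum_n_m G (S K) (2 * K))).
  { transitivity (sum_n (fun n => sum_n (fun k => T n k) (2 * K)) (2 * K)).
    { apply sum_n_ext_loc. intros n Hn. unfold A_row. symmetry. apply sum_n_zero_ext; [| lia].
      intros i Hi. apply T_zero1. exact Hi. }
    rewrite sum_n_fubini. fold G. unfold sum_n at 1 2. apply sum_n_m_Chasles; lia. }
  unfold ball_norm. change (Cmod (Cminus (sum_n (fun k => Cmult (Cmult (pow_n (K := C_Ring) (Copp (Cmult x y)) k) (Cnat (binom (2 * k) k ^ 2))) (legendreP (2 * k) w)) K) A) < eps).
  rewrite HL.
  set (D := sum_n_m G (S K) (2 * K)).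
  set (SR := sum_n (A_row x y) (2 * K)).
  assert (E : Cminus (sum_n G K) A = Cplus (Cminus SR A) (Copp D)).
  { unfold SR. rewrite HR. change (@eq C (Cminus (sum_n G K) A) (Cplus (Cminus (Cplus (sum_n G K) D) A) (Copp D))). ring. }
  rewrite E. eapply Rle_lt_trans. apply Cmod_triangle. rewrite Cmod_opp.
  assert (H1 : norm (minus SR A) < e2) by (apply HN1; lia).
  assert (H2 : norm D <= sum_n_m (fun n => sum_n (fun k => Cmod (A_term x y n k)) n) (S K) (2 * K)).
  { unfold D. eapply Rle_trans; [exact (norm_sum_n_m (V := C_NormedModule) G (S K) (2 * K))|].
    eapply Rle_trans.
    2:{ apply (bound_D (fun n k => Cmod (A_term x y n k)) K).
        - intros; apply Cmod_ge_0.
        - intros n k Hnk. rewrite T_zero1 by exact Hnk. apply Cmod_0. }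
    apply sum_n_m_le. intros k. unfold G. unfold sum_n at 1. eapply Rle_trans; [exact (norm_sum_n_m (V := C_NormedModule) (fun n => T n k) 0 (2 * K))|].
    apply Req_le. apply sum_n_m_ext. intros n. reflexivity. }
  assert (H3 : norm (sum_n_m (fun n => sum_n (fun k => Cmod (A_term x y n k)) n) (S K) (2 * K)) < e2)
    by (apply HN2; lia).
  assert (H4 : sum_n_m (fun n => sum_n (fun k => Cmod (A_term x y n k)) n) (S K) (2 * K)
               <= norm (sum_n_m (fun n => sum_n (fun k => Cmod (A_term x y n k)) n) (S K) (2 * K)))
    by apply Rle_abs.
  change (Cmod (Cminus SR A) < e2) in H1. change (Cmod D <= sum_n_m (fun n => sum_n (fun k => Cmod (A_term x y n k)) n) (S K) (2 * K)) in H2.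
  change (pos e2) with (eps / 2) in H1, H3. lra.
Qed.
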